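(* In the setting described in the context, if $g_m$ is a $\Phi$-linear combination of elements of the form $w\,g(i,\varepsilon,\sigma)$, where $q_i\varepsilon\sigma\to q_jT_\alpha T_\beta$ is a command of $M$ and $w\in W_{\varepsilon\sigma}$, then $m\in S$.
   Context: $\Phi$ is a commutative ring with unity $1\ne0$, regarded as a differential ring with the commuting derivations $\delta_1,\delta_2$ acting as zero. $S\subseteq\mathbb{N}$ is recursively enumerable and $M$ is a two-tape acyclic Minsky machine with states $q_0,\ldots,q_n$ ($q_0$ terminal) such that for every $x\in\mathbb{N}$, starting at configuration $[1,2^{2^x},0]$, $M$ reaches $[0,1,0]$ in finitely many steps if $x\in S$ and operates infinitely if $x\notin S$. Minsky machine conventions: two tapes infinite to the right with cells $0,1,2,\ldots$; cell $0$ contains $1$, all others $0$; a configuration $[i,a,b]$ means state $q_i$, head at cell $a$ of tape 1 and cell $b$ of tape 2. Commands are $q_i\varepsilon\sigma\to q_jT_\alpha T_\beta$ with $1\le i\le n$, $0\le j\le n$, $\varepsilon,\sigma\in\{0,1\}$, $\alpha,\beta\in\{-1,0,1\}$, $\alpha\ge0$ if $\varepsilon=1$, $\beta\ge0$ if $\sigma=1$, at most one per triple $(i,\varepsilon,\sigma)$; such a command applies to $[i,a,b]$ when ($\varepsilon=1$ iff $a=0$) and ($\sigma=1$ iff $b=0$), producing $[j,a+\alpha,b+\beta]$. Acyclic means no configuration recurs after a positive number of steps. $A=\Phi\{x_1,x_2,q_0,\ldots,q_n\}$ is the differential polynomial ring w.r.t. $\delta_1,\delta_2$ (polynomial ring in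 independent variables $\delta_1^a\delta_2^b(y)$, $y\in\{x_1,x_2,q_0,\ldots,q_n\}$, $\delta_1,\delta_2$ raising the corresponding exponent). $J$ is the differential ideal generated by $\delta_1(x_2),\delta_2(x_1)$, and $B=A/J$ with induced derivations. For each command of $M$, $g(i,\varepsilon,\sigma)$ is the image in $B$ of $x_1^{\varepsilon}x_2^{\sigma}\delta_1^{1-\varepsilon}\delta_2^{1-\sigma}(q_i)-x_1^{\varepsilon}x_2^{\sigma}\delta_1^{1-\varepsilon+\alpha}\delta_2^{1-\sigma+\beta}(q_j)$; $g_m$ is the image of $x_1x_2\delta_1^{2^{2^m}}(q_1)-x_1x_2\delta_1(q_0)$. $B^e$ is the ring which is the free left $B$-module on the basis $\{\delta_1^i\delta_2^j: i,j\ge0\}$ with $\delta_l$ commuting and $\delta_l b=b\delta_l+\delta_l(b)$; $B$ is a left $B^e$-module ($b$ acting by multiplication, $\delta_l$ as derivations). $W_{\varepsilon\sigma}$ is the set of elements $x_1^{1-\varepsilon}x_2^{1-\sigma}\delta_1^i\delta_2^j\in B^e$ with $i,j\ge0$, $i=0$ if $\varepsilon=1$, $j=0$ if $\sigma=1$ (so $W_{11}=\{1\}$). *)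

(* Defs.v *)
From HB Require Import structures.
From mathcomp Require Import all_boot all_order all_algebra.
From mathcomp Require Import finmap.
From mathcomp.multinomials Require Import monalg.

Set Implicit Arguments.
Unset Strict Implicit.
Unset Printing Implicit Defensive.

Import Order.TTheory GRing.Theory Num.Theory.
Local Open Scope ring_scope.

(* Two-tape Minsky machines with states q_0, ..., q_n (q_0 terminal). *)
(* A command  q_i eps sigma -> q_j T_alpha T_beta  is encoded by       *)
(* cmd i eps sigma = Some (j, alpha, beta); at most one command per   *)
(* triple is built in since cmd is a function.                       *)

Definition minsky_cmds (n : nat) :=
  'I_n.+1 -> bool -> bool -> option ('I_n.+1 * int * int).

Definition wf_cmds (n : nat) (cmd : minsky_cmds n) : Prop :=
  forall (i : 'I_n.+1) (e s : bool) (j : 'I_n.+1) (al be : int),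
    cmd i e s = Some (j, al, be) ->
    [/\ (0 < val i)%N,
        (-1 <= al <= 1), (-1 <= be <= 1),
        (e -> 0 <= al) & (s -> 0 <= be)].

(* configuration [i, a, b] : state q_i, head positions a, b *)
Definition config (n : nat) := ('I_n.+1 * nat * nat)%type.

Definition mstep (n : nat) (cmd : minsky_cmds n) (c : config n)
  : option (config n) :=
  let: (i, a, b) := c in
  match cmd i (a == 0)%N (b == 0)%N with
  | Some (j, al, be) => Some (j, absz (a%:Z + al), absz (b%:Z + be))
  | None => None
  end.

Fixpoint mrun (n : nat) (cmd : minsky_cmds n) (k : nat) (c : config n)
  : option (config n) :=
  match k with
  | 0%N => Some c
  | k'.+1 => match mstep cmd c with
             | Some c' => mrun cmd k' c'
             | None => None
             end
  end.

Definition acyclic (n : nat) (cmd : minsky_cmds n) : Prop :=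
  forall (c : config n) (k : nat), (0 < k)%N -> mrun cmd k c <> Some c.

(* The differential polynomial ring A = Phi{x1, x2, q_0, ..., q_n}:   *)
(* the polynomial ring in the independent variables                   *)
(* delta1^a delta2^b (y), encoded as (y, a, b), where y is            *)
(* inl false = x1, inl true = x2, inr i = q_i.                         *)

Definition dvar (n : nat) := ((bool + 'I_n.+1) * nat * nat)%type.

Definition dpoly (Phi : comNzRingType) (n : nat) :=
  {malg Phi[{cmonom (dvar n)}]}.

Section DiffPoly.
Variables (Phi : comNzRingType) (n : nat).
Local Notation A := (dpoly Phi n).

Definition dX (v : dvar n) : A := << ucm v >>.

Definition shift1 (v : dvar n) : dvar n := (v.1.1, v.1.2.+1, v.2).
Definition shift2 (v : dvar n) : dvar n := (v.1.1, v.1.2, v.2.+1).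

(* the unique Phi-linear derivation of A sending the variable v to
   the variable sh v (Leibniz rule on monomials) *)
Definition dder (sh : dvar n -> dvar n) (p : A) : A :=
  \sum_(m <- msupp p)
     p@_m *: \sum_(v <- finsupp m)
               ((m v)%:R * << divcm m (ucm v) >> * dX (sh v)).

Definition delta1 : A -> A := dder shift1.
Definition delta2 : A -> A := dder shift2.

Definition vx1 : A := dX (inl false, 0%N, 0%N).
Definition vx2 : A := dX (inl true, 0%N, 0%N).
Definition vq (i : 'I_n.+1) : A := dX (inr i, 0%N, 0%N).

Definition is_diff_ideal (I : A -> Prop) : Prop :=
  [/\ I 0,
      (forall a b, I a -> I b -> I (a + b)),
      (forall r a, I a -> I (r * a)),
      (forall a, I a -> I (delta1 a)) &
      (forall a, I a -> I (delta2 a))].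

Definition inJ (p : A) : Prop :=
  forall I : A -> Prop, is_diff_ideal I ->
    I (delta1 vx2) -> I (delta2 vx1) -> I p.

(* equality in B = A / J of the images of p and q *)
Definition eqB (p q : A) : Prop := inJ (p - q).

(* (a representative in A of) g(i, eps, sigma) for the command
   q_i eps sigma -> q_j T_al T_be *)
Definition gcmd (i : 'I_n.+1) (e s : bool) (j : 'I_n.+1) (al be : int) : A :=
  vx1 ^+ e * vx2 ^+ s * iter (~~ e) delta1 (iter (~~ s) delta2 (vq i))
  - vx1 ^+ e * vx2 ^+ s
      * iter (absz ((~~ e)%:Z + al)) delta1 (iter (absz ((~~ s)%:Z + be)) delta2 (vq j)).

(* (a representative in A of) g_m ; q_1 is (inord 1) *)
Definition gm (m : nat) : A :=
  vx1 * vx2 * iter (2 ^ (2 ^ m))%N delta1 (vq (inord 1))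
  - vx1 * vx2 * delta1 (vq ord0).

(* action of w = x1^(1-eps) x2^(1-sigma) delta1^a delta2^b in B^e on p *)
Definition wact (e s : bool) (a b : nat) (p : A) : A :=
  vx1 ^+ (~~ e) * vx2 ^+ (~~ s) * iter a delta1 (iter b delta2 p).

(* w = x1^(1-eps) x2^(1-sigma) delta1^a delta2^b lies in W_{eps sigma} *)
Definition inW (e s : bool) (a b : nat) : Prop :=
  (e -> a = 0%N) /\ (s -> b = 0%N).

End DiffPoly.

(* one term  c * w * g(i, eps, sigma)  of a Phi-linear combination:
   (c, (i, eps, sigma), (j, al, be), (a, b)) *)
Definition lc_term (Phi : comNzRingType) (n : nat) :=
  (Phi * ('I_n.+1 * bool * bool) * ('I_n.+1 * int * int) * (nat * nat))%type.

Definition lc_valid (Phi : comNzRingType) (n : nat) (cmd : minsky_cmds n)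
  (t : lc_term Phi n) : Prop :=
  let: (c, (i, e, s), (j, al, be), (a, b)) := t in
  cmd i e s = Some (j, al, be) /\ inW e s a b.

Definition lc_val (Phi : comNzRingType) (n : nat) (t : lc_term Phi n)
  : dpoly Phi n :=
  let: (c, (i, e, s), (j, al, be), (a, b)) := t in
  c *: wact e s a b (gcmd Phi i e s j al be).

(* Main.v *)
Require Import Defs.
From HB Require Import structures.
From mathcomp Require Import all_boot all_order all_algebra.
From mathcomp Require Import finmap.
From mathcomp.multinomials Require Import monalg.
From Stdlib Require Import ClassicalEpsilon Classical.
From mathcomp Require Import zify.
Import Num.Theory Order.TTheory.
Import GRing.Theory.
Local Open Scope ring_scope.

Section Pf.
Variables (Phi : comNzRingType) (n : nat).
Local Notation A := (dpoly Phi n).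
Local Notation K := (cmonom (dvar n)).

Definition Dm (sh : dvar n -> dvar n) (m : K) : A :=
  \sum_(v <- finsupp m) ((m v)%:R * << divcm m (ucm v) >> * dX Phi (sh v)).

Lemma dderEw sh (p : A) (d : {fset K}) : (msupp p `<=` d)%fset ->
  dder sh p = \sum_(k <- d) p@_k *: Dm sh k.
Proof.
move=> le; rewrite /dder (big_fset_incl _ le) //= => x _ /mcoeff_outdom ->.
by rewrite scale0r.
Qed.

Lemma dderD sh (p q : A) : dder sh (p + q) = dder sh p + dder sh q.
Proof.
set d := (msupp p `|` msupp q `|` msupp (p + q))%fset.
rewrite (@dderEw _ (p + q) d) ?fsubsetUr //.
rewrite (@dderEw _ p d); last by rewrite /d -fsetUA fsubsetUl.
rewrite (@dderEw _ q d); last by rewrite /d fsubsetU // fsubsetUr.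
by rewrite -big_split /=; apply: eq_bigr => k _; rewrite mcoeffD scalerDl.
Qed.

Lemma dderZ sh c (p : A) : dder sh (c *: p) = c *: dder sh p.
Proof.
rewrite (@dderEw _ (c *: p) (msupp p)) ?msuppZ_le // /dder scaler_sumr.
by apply: eq_bigr => k _; rewrite mcoeffZ scalerA.
Qed.

Lemma dderN sh (p : A) : dder sh (- p) = - dder sh p.
Proof. by rewrite -scaleN1r dderZ scaleN1r. Qed.

Lemma dderB sh (p q : A) : dder sh (p - q) = dder sh p - dder sh q.
Proof. by rewrite dderD dderN. Qed.

Lemma dder0 sh : dder sh (0 : A) = 0.
Proof. by have := dderB sh 0 0; rewrite subrr => ->; rewrite subrr. Qed.

Lemma dderU sh (m : K) : dder sh (<< m >> : A) = Dm sh m.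
Proof.
rewrite (@dderEw _ _ [fset m]%fset); last exact: msuppU_le.
by rewrite big_seq_fset1 mcoeffUU scale1r.
Qed.

Lemma iterB sh k (p q : A) : iter k (dder sh) (p - q) = iter k (dder sh) p - iter k (dder sh) q.
Proof. by elim: k => //= k ->; rewrite dderB. Qed.

Lemma UM (m1 m2 : K) : (<< m1 >> : A) * << m2 >> = << mmul m1 m2 >>.
Proof. by rewrite malgM_def fgmulUU mulr1. Qed.

Lemma dder_dX sh (v : dvar n) : dder sh (dX Phi v) = dX Phi (sh v).
Proof.
rewrite /dX dderU /Dm mdomU big_seq_fset1 cmUU mul1r.
have -> : divcm (ucm v) (ucm v) = (mone : K).
  by apply/eqP/cmP => i; rewrite divcmE subnn cm1.
by rewrite -/(1 : A) mul1r.
Qed.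


Definition badv (v : dvar n) : bool :=
  match v with
  | (inl false, _, b) => (0 < b)%N
  | (inl true, a, _) => (0 < a)%N
  | (inr _, _, _) => false
  end.

Definition badm (mo : K) : Prop := exists u, badv u /\ (0 < mo u)%N.

Definition Ip (p : A) : Prop := forall mo, ~ badm mo -> p@_mo = 0.

Lemma badmMr (m1 m2 : K) : badm m2 -> badm (mmul m1 m2).
Proof. by case=> u [bu pu]; exists u; rewrite cmM; split => //; rewrite addn_gt0 pu orbT. Qed.

Lemma badmMl (m1 m2 : K) : badm m1 -> badm (mmul m1 m2).
Proof. by case=> u [bu pu]; exists u; rewrite cmM; split => //; rewrite addn_gt0 pu. Qed.

Lemma Ip0 : Ip 0.
Proof. by move=> mo _; rewrite mcoeff0. Qed.

Lemma IpD p q : Ip p -> Ip q -> Ip (p + q).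
Proof. by move=> hp hq mo hm; rewrite mcoeffD hp // hq // addr0. Qed.

Lemma IpN p : Ip p -> Ip (- p).
Proof. by move=> hp mo hm; rewrite mcoeffN hp // oppr0. Qed.

Lemma IpB p q : Ip p -> Ip q -> Ip (p - q).
Proof. by move=> hp hq; apply: IpD => //; apply: IpN. Qed.

Lemma IpM r p : Ip p -> Ip (r * p).
Proof.
move=> hp mo hm; rewrite mcoeffMl big1 // => k1 _; rewrite big1 // => k2 _.
case: eqP => [E|]; last by rewrite mulr0n.
case: (classic (badm k2)) => [b2|nb2]; first by case: hm; rewrite -E; apply: badmMr.
by rewrite hp // mulr0 mul0rn.
Qed.

Lemma IpZ c p : Ip p -> Ip (c *: p).
Proof. by move=> hp mo hm; rewrite mcoeffZ hp // mulr0. Qed.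

Lemma IpU (m : K) : badm m -> Ip << m >>.
Proof.
move=> bm mo hm; rewrite mcoeffU1; case: eqP => // E; case: hm; by rewrite -E.
Qed.

Lemma Ip_sum (T : eqType) (r : seq T) (F : T -> A) :
  (forall x, x \in r -> Ip (F x)) -> Ip (\sum_(x <- r) F x).
Proof.
elim: r => [|x r IH] h; first by rewrite big_nil; apply: Ip0.
rewrite big_cons; apply: IpD; first by apply: h; rewrite inE eqxx.
by apply: IH => y hy; apply: h; rewrite inE hy orbT.
Qed.
Arguments Ip_sum [T] r F.

Lemma Ip_dder sh : (forall v, badv v -> badv (sh v)) ->
  forall p, Ip p -> Ip (dder sh p).
Proof.
move=> hsh p hp; rewrite /dder; apply: Ip_sum => m _.
case: (classic (badm m)) => [bm|nbm]; last first.
  by rewrite hp // scale0r; apply: Ip0.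
apply: IpZ; rewrite /Dm; apply: Ip_sum => v _.
rewrite -mulrA; apply: IpM; rewrite /dX UM; apply: IpU.
case: bm => u [bu pu].
case: (eqVneq u v) => [Euv|Nuv].
  by exists (sh v); rewrite cmM cmUU addn1; split => //; apply: hsh; rewrite -Euv.
exists u; split => //; rewrite cmM divcmE cmU eq_sym (negbTE Nuv) subn0.
  by rewrite addn_gt0 pu.
Qed.

Lemma sum2 (F : dvar n -> A) (u w : dvar n) : u != w ->
  \sum_(v <- ([fset u] `|` [fset w])%fset) F v = F u + F w.
Proof. move=> nuw. Timeout 10 rewrite big_fsetU1. Timeout 10 rewrite big_seq_fset1. Timeout 10 done. Timeout 10 by rewrite inE. Qed.

Lemma tidy0 : True. Proof. by []. Qed.
Lemma dder_XX sh (u w : dvar n) : u != w ->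
  dder sh (dX Phi u * dX Phi w) = dX Phi (sh u) * dX Phi w + dX Phi u * dX Phi (sh w).
Proof.
move=> nuw.
have E := (UM (ucm u) (ucm w)).
rewrite [X in dder _ X]E dderU /Dm mdomD !mdomU.
Timeout 10 rewrite (sum2 (fun v => ((mmul (ucm u) (ucm w)) v)%:R * << divcm (mmul (ucm u) (ucm w)) (ucm v) >> * dX Phi (sh v)) u w nuw).
have h1 : mmul (ucm u) (ucm w) u = 1%N by rewrite cmM !cmU eqxx eq_sym (negbTE nuw).
have h2 : mmul (ucm u) (ucm w) w = 1%N by rewrite cmM !cmU eqxx (negbTE nuw).
have h3 : divcm (mmul (ucm u) (ucm w)) (ucm u) = ucm w.
  by apply/eqP/cmP => i; rewrite divcmE cmM !cmU addKn.
have h4 : divcm (mmul (ucm u) (ucm w)) (ucm w) = ucm u.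
  by apply/eqP/cmP => i; rewrite divcmE cmM !cmU addnK.
Timeout 10 rewrite h1 h2 h3 h4.
have tidy : forall a b c d : A, 1%:R * a * c + 1%:R * b * d = c * a + b * d.
  by move=> a b c d; rewrite !mulr1n !mul1r [c * a]mulrC.
Timeout 10 exact: tidy.
Qed.

Definition Eq (p q : A) := Ip (p - q).

Lemma Eq_refl p : Eq p p.
Proof. by rewrite /Eq subrr; apply: Ip0. Qed.

Lemma Eq_trans p q r : Eq p q -> Eq q r -> Eq p r.
Proof. by move=> h1 h2; have := IpD _ _ h1 h2; rewrite /Eq addrA subrK. Qed.

Lemma Eq_M r p q : Eq p q -> Eq (r * p) (r * q).
Proof. by move=> h; rewrite /Eq -mulrBr; apply: IpM. Qed.

Lemma Eq_dder sh p q : (forall v, badv v -> badv (sh v)) -> Eq p q -> Eq (dder sh p) (dder sh q).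
Proof. by move=> hsh h; rewrite /Eq -dderB; apply: Ip_dder. Qed.

Lemma Eq_B p1 q1 p2 q2 : Eq p1 q1 -> Eq p2 q2 -> Eq (p1 - p2) (q1 - q2).
Proof.
move=> h1 h2; have := IpB _ _ h1 h2; rewrite /Eq.
have -> : p1 - q1 - (p2 - q2) = p1 - p2 - (q1 - q2).
  by rewrite !opprD [LHS]addrACA.
done.
Qed.

Lemma Eq_addl a b : Ip a -> Eq (a + b) b.
Proof. by rewrite /Eq addrK. Qed.

Lemma Eq_eq p q : p = q -> Eq p q.
Proof. by move->; apply: Eq_refl. Qed.

Lemma IpXX (x y : dvar n) : badv x -> Ip (dX Phi x * dX Phi y).
Proof.
move=> bx; have E := UM (ucm x) (ucm y).
rewrite /dX E; apply: IpU.
by exists x; rewrite cmM cmUU; split.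
Qed.

Lemma bad_sh1 v : badv v -> badv (shift1 v).
Proof. by case: v => [[[[]|i] a] b]. Qed.
Lemma bad_sh2 v : badv v -> badv (shift2 v).
Proof. by case: v => [[[[]|i] a] b]. Qed.

Definition isq (v : dvar n) : bool := if v.1.1 is inr _ then true else false.

Lemma iter_dX sh k (v : dvar n) : iter k (dder sh) (dX Phi v) = dX Phi (iter k sh v).
Proof.
elim: k => [|k IH]; first by [].
rewrite [iter k.+1 _ _]iterS [iter k.+1 sh v]iterS [iter k _ _]IH.
exact: dder_dX.
Qed.

Lemma keyiter sh (u : dvar n) : (forall v, badv v -> badv (sh v)) ->
  badv (sh u) -> isq u = false -> (forall v, isq (sh v) = isq v) ->
  forall k (w : dvar n), isq w ->
  Eq (iter k (dder sh) (dX Phi u * dX Phi w)) (dX Phi u * dX Phi (iter k sh w)).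
Proof.
move=> hsh bu qu qsh; elim=> [|k IH] w qw; first exact: Eq_refl.
rewrite [iter k.+1 _ _]iterS [iter k.+1 sh w]iterS.
apply: Eq_trans (Eq_dder _ _ _ hsh (IH w qw)) _.
have nuw : u != iter k sh w.
  apply/eqP => E; move: qu; rewrite E.
  by elim: k {IH E} => [|k IHk]; rewrite ?iterS ?qsh //= qw.
rewrite [dder _ _]dder_XX //; apply: Eq_addl; exact: IpXX.
Qed.

Lemma iter_sh1 k (x : bool + 'I_n.+1) a b :
  iter k (@shift1 n) (x, a, b) = (x, (a + k)%N, b).
Proof. by elim: k => [|k IH]; rewrite ?addn0 // iterS IH /shift1 addnS. Qed.
Lemma iter_sh2 k (x : bool + 'I_n.+1) a b :
  iter k (@shift2 n) (x, a, b) = (x, a, (b + k)%N).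
Proof. by elim: k => [|k IH]; rewrite ?addn0 // iterS IH /shift2 addnS. Qed.

Lemma caseTT (x y z : A) : Eq (x^+0 * y^+0 * (x^+1 * y^+1 * z)) (x*y*z).
Proof. by apply: Eq_eq; rewrite !expr0 !expr1 !mul1r. Qed.

Lemma caseTF (x y : A) (F : A -> A) z z' : Eq (F (x * z)) (x * z') ->
  Eq (x^+0 * y^+1 * F (x^+1 * y^+0 * z)) (x * y * z').
Proof.
move=> h; rewrite expr0 !expr1 expr0 mul1r mulr1 [x * y]mulrC -mulrA.
exact: Eq_M.
Qed.

Lemma caseFT (x y : A) (F : A -> A) z z' : Eq (F (y * z)) (y * z') ->
  Eq (x^+1 * y^+0 * F (x^+0 * y^+1 * z)) (x * y * z').
Proof.
move=> h; rewrite expr0 !expr1 expr0 mul1r mulr1 -mulrA.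
exact: Eq_M.
Qed.

Lemma caseFF (x y : A) (F : A -> A) z z' : F z = z' ->
  Eq (x^+1 * y^+1 * F (x^+0 * y^+0 * z)) (x * y * z').
Proof. by move=> h; apply: Eq_eq; rewrite !expr0 !expr1 !mul1r h. Qed.

Definition x1v : dvar n := (inl false, 0%N, 0%N).
Definition x2v : dvar n := (inl true, 0%N, 0%N).

Lemma term0 (e s : bool) a b (w : dvar n) : isq w -> inW e s a b ->
  Eq (vx1 Phi n ^+ (~~e) * vx2 Phi n ^+ (~~s) * iter a (@delta1 Phi n) (iter b (@delta2 Phi n)
        (vx1 Phi n ^+ e * vx2 Phi n ^+ s * dX Phi w)))
     (vx1 Phi n * vx2 Phi n * dX Phi (iter a (@shift1 n) (iter b (@shift2 n) w))).
Proof.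
move=> qw [ha hb]; case: e ha => ha; case: s hb => hb.
- rewrite (ha erefl) (hb erefl); exact: caseTT.
- rewrite (ha erefl).
  apply: (caseTF _ _ (fun p => iter 0 (@delta1 Phi n) (iter b (@delta2 Phi n) p))).
  apply: (@keyiter (@shift2 n) x1v bad_sh2 erefl erefl _ b w qw).
  by case=> [[[]]].
- rewrite (hb erefl).
  apply: (caseFT _ _ (fun p => iter a (@delta1 Phi n) (iter 0 (@delta2 Phi n) p))).
  apply: (@keyiter (@shift1 n) x2v bad_sh1 erefl erefl _ a w qw).
  by case=> [[[]]].
- apply: (caseFF _ _ (fun p => iter a (@delta1 Phi n) (iter b (@delta2 Phi n) p))).
  rewrite [iter b (@delta2 Phi n) _]iter_dX.
  exact: iter_dX.
Qed.


Lemma Eq_Z c p q : Eq p q -> Eq (c *: p) (c *: q).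
Proof. by move=> h; rewrite /Eq -scalerBr; apply: IpZ. Qed.

Lemma Eq_Bsplit (x p1 p2 q1 q2 : A) : Eq (x * p1) q1 -> Eq (x * p2) q2 ->
  Eq (x * (p1 - p2)) (q1 - q2).
Proof. by move=> h1 h2; rewrite mulrBr; apply: Eq_B. Qed.

Lemma term1 (e s : bool) a b (i : 'I_n.+1) a0 b0 : inW e s a b ->
  Eq (vx1 Phi n ^+ (~~e) * vx2 Phi n ^+ (~~s) * iter a (@delta1 Phi n) (iter b (@delta2 Phi n)
        (vx1 Phi n ^+ e * vx2 Phi n ^+ s * iter a0 (@delta1 Phi n) (iter b0 (@delta2 Phi n) (vq Phi i)))))
     (vx1 Phi n * vx2 Phi n * dX Phi (inr i, (a0 + a)%N, (b0 + b)%N)).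
Proof.
move=> hw.
have E1 : iter a0 (@delta1 Phi n) (iter b0 (@delta2 Phi n) (vq Phi i)) = dX Phi (inr i, a0, b0).
  Timeout 10 rewrite /vq [iter b0 _ _]iter_dX.
  Timeout 10 rewrite [iter a0 _ _]iter_dX.
  Timeout 10 rewrite iter_sh2 iter_sh1.
  Timeout 10 by rewrite !add0n.
Timeout 10 rewrite E1.
have E2 : (inr i, (a0+a)%N, (b0+b)%N) = iter a (@shift1 n) (iter b (@shift2 n) (inr i, a0, b0)).
  Timeout 10 by rewrite iter_sh2 iter_sh1.
Timeout 10 rewrite E2.
Timeout 10 exact: term0.
Qed.

Lemma lc_Eq c (i : 'I_n.+1) (e s : bool) (j : 'I_n.+1) (al be : int) a b : inW e s a b ->
  Eq (lc_val (c, (i, e, s), (j, al, be), (a, b)))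
     (c *: (vx1 Phi n * vx2 Phi n * dX Phi (inr i, ((~~e : nat) + a)%N, ((~~s : nat) + b)%N)
           - vx1 Phi n * vx2 Phi n * dX Phi (inr j, (absz ((~~e)%:Z + al)%R + a)%N, (absz ((~~s)%:Z + be)%R + b)%N))).
Proof.
move=> hw; rewrite /lc_val /wact /gcmd.
Timeout 10 rewrite [iter b _ _]iterB.
Timeout 10 rewrite [iter a _ _]iterB.
Timeout 10 apply: Eq_Z.
Timeout 10 apply: Eq_Bsplit.
Timeout 10 exact: term1.
Timeout 10 exact: term1.
Qed.

End Pf.

Lemma absz_shift (x a : nat) (al : int) : 0 <= x%:Z + al -> absz ((x + a)%:Z + al) = (absz (x%:Z + al)%R + a)%N.
Proof. move=> h. lia. Qed.
Lemma nonneg (e : bool) (al : int) : -1 <= al <= 1 -> (e -> 0 <= al) -> 0 <= (~~e)%:Z + al.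
Proof. case: e => h1 h2; [have := h2 erefl|] => /=; lia. Qed.

Section Fn.
Variables (Phi : comNzRingType) (n : nat) (cmd : minsky_cmds n).
Local Notation A := (dpoly Phi n).
Local Notation K := (cmonom (dvar n)).

Lemma mrunS k c : mrun cmd k.+1 c = obind (mstep cmd) (mrun cmd k c).
Proof.
elim: k c => [|k IH] c /=; first by case: (mstep cmd c).
by case: (mstep cmd c) => // c'; rewrite -IH.
Qed.

Definition reach (c : config n) : Prop := exists k, mrun cmd k c = Some (ord0, 1%N, 0%N).
Definition hc (c : config n) : Phi := if excluded_middle_informative (reach c) then 1 else 0.
Definition cvar (c : config n) : dvar n := (inr c.1.1, c.1.2, c.2).
Definition Mc (c : config n) : K := mmul (mmul (ucm (x1v n)) (ucm (x2v n))) (ucm (cvar c)).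
Definition wgt (mo : K) : Phi :=
  match excluded_middle_informative (exists c, mo = Mc c) with
  | left H => hc (proj1_sig (constructive_indefinite_description _ H))
  | right _ => 0 end.
Definition Fp (p : A) : Phi := \sum_(k <- msupp p) p@_k * wgt k.

Lemma Mc_at (c : config n) (u : dvar n) : Mc c u = ((x1v n == u) + (x2v n == u) + (cvar c == u))%N.
Proof. by rewrite /Mc !cmM !cmU. Qed.

Lemma Mc_inj c c' : Mc c = Mc c' -> c = c'.
Proof.
move=> E; have := congr1 (fun m : K => m (cvar c)) E; rewrite !Mc_at eqxx.
case: c E => [[i a] b] E /=; case: c' E => [[i' a'] b'] E /=.
by case: eqP => // -[-> -> ->].
Qed.

Lemma wgt_Mc c : wgt (Mc c) = hc c.
Proof.
rewrite /wgt; case: excluded_middle_informative => [H|[]]; last by exists c.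
by case: constructive_indefinite_description => c' /= /Mc_inj ->.
Qed.

Lemma Mc_good c : ~ badm n (Mc c).
Proof.
case=> u [+]; rewrite Mc_at.
case: (eqVneq (x1v n) u) => [<-//|_]; case: (eqVneq (x2v n) u) => [<-//|_].
by case: (eqVneq (cvar c) u) => [<-//|_].
Qed.

Lemma wgt_bad (mo : K) : badm n mo -> wgt mo = 0.
Proof.
move=> bm; rewrite /wgt; case: excluded_middle_informative => // -[c E].
by case: (Mc_good c); rewrite -E.
Qed.

Lemma FpEw (p : A) (d : {fset K}) : (msupp p `<=` d)%fset ->
  Fp p = \sum_(k <- d) p@_k * wgt k.
Proof. by move=> le; rewrite /Fp (big_fset_incl _ le) //= => x _ /mcoeff_outdom ->; rewrite mul0r. Qed.

Lemma FpD (p q : A) : Fp (p + q) = Fp p + Fp q.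
Proof.
set d := (msupp p `|` msupp q `|` msupp (p + q))%fset.
rewrite (@FpEw (p + q) d) ?fsubsetUr //.
rewrite (@FpEw p d); last by rewrite /d -fsetUA fsubsetUl.
rewrite (@FpEw q d); last by rewrite /d fsubsetU // fsubsetUr.
by rewrite -big_split /=; apply: eq_bigr => k _; rewrite mcoeffD mulrDl.
Qed.

Lemma FpZ c (p : A) : Fp (c *: p) = c * Fp p.
Proof.
rewrite (@FpEw (c *: p) (msupp p)) ?msuppZ_le // /Fp mulr_sumr.
by apply: eq_bigr => k _; rewrite mcoeffZ mulrA.
Qed.

Lemma FpB (p q : A) : Fp (p - q) = Fp p - Fp q.
Proof. by rewrite FpD -scaleN1r FpZ mulN1r. Qed.

Lemma Fp_Ip p : Ip Phi n p -> Fp p = 0.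
Proof.
move=> hp; rewrite /Fp big1 // => k _.
case: (classic (badm n k)) => [bk|nbk]; first by rewrite wgt_bad // mulr0.
by rewrite hp // mul0r.
Qed.

Lemma Fp_Eq p q : Eq Phi n p q -> Fp p = Fp q.
Proof. by move=> h; apply/eqP; rewrite -subr_eq0 -FpB Fp_Ip. Qed.

Lemma Fp_U (m : K) : Fp (<< m >> : A) = wgt m.
Proof. by rewrite (@FpEw _ [fset m]%fset) ?msuppU_le // big_seq_fset1 mcoeffUU mul1r. Qed.

Lemma XXq (c : config n) : vx1 Phi n * vx2 Phi n * dX Phi (cvar c) = << Mc c >>.
Proof.
rewrite /Mc.
have E1 := UM Phi n (mmul (ucm (x1v n)) (ucm (x2v n))) (ucm (cvar c)).
have E2 := UM Phi n (ucm (x1v n)) (ucm (x2v n)).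
rewrite -E1 -E2; by [].
Qed.

Lemma Fp_XXq i a b : Fp (vx1 Phi n * vx2 Phi n * dX Phi (inr i, a, b)) = hc (i, a, b).
Proof. by rewrite (XXq (i, a, b)) Fp_U wgt_Mc. Qed.


Lemma mrunS' k c : mrun cmd k.+1 c = if mstep cmd c is Some c' then mrun cmd k c' else None.
Proof. by []. Qed.

Lemma hc_step (Hwf : wf_cmds cmd) (i : 'I_n.+1) (e s : bool) (j : 'I_n.+1) (al be : int) a b :
  cmd i e s = Some (j, al, be) -> inW e s a b ->
  hc (i, ((~~e : nat) + a)%N, ((~~s : nat) + b)%N)
  = hc (j, (absz ((~~e)%:Z + al)%R + a)%N, (absz ((~~s)%:Z + be)%R + b)%N).
Proof.
move=> Hc [ha hb].
have [hi hal hbe hea hsb] := Hwf _ _ _ _ _ _ Hc.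
have he : (((~~e : nat) + a) == 0)%N = e by move: ha; case: (e) => [->|].
have hs : (((~~s : nat) + b) == 0)%N = s by move: hb; case: (s) => [->|].
have st : mstep cmd (i, ((~~e : nat) + a)%N, ((~~s : nat) + b)%N)
   = Some (j, (absz ((~~e)%:Z + al)%R + a)%N, (absz ((~~s)%:Z + be)%R + b)%N).
  rewrite /mstep he hs Hc.
  by rewrite !absz_shift //; apply: nonneg.
have E : reach (i, ((~~e : nat) + a)%N, ((~~s : nat) + b)%N) <->
         reach (j, (absz ((~~e)%:Z + al)%R + a)%N, (absz ((~~s)%:Z + be)%R + b)%N).
  split.
    case=> -[|k].
      by move=> /= -[Ei _ _]; move: hi; rewrite Ei.
    by rewrite mrunS' st => hk; exists k.
  by case=> k hk; exists k.+1; rewrite mrunS' st.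
rewrite /hc; case: excluded_middle_informative => h1; case: excluded_middle_informative => h2 //.
- by case: h2; apply/E.
- by case: h1; apply/E.
Qed.


Lemma Fp_sum (T : Type) (r : seq T) (F : T -> A) : Fp (\sum_(x <- r) F x) = \sum_(x <- r) Fp (F x).
Proof.
elim: r => [|x r IH]; last by rewrite !big_cons FpD IH.
rewrite !big_nil; have := FpB (0 : A) 0; rewrite subrr => ->; by rewrite subrr.
Qed.

Lemma Fp_term (c : Phi) (i : 'I_n.+1) a1 b1 (j : 'I_n.+1) a2 b2 :
  hc (i, a1, b1) = hc (j, a2, b2) ->
  Fp (c *: (vx1 Phi n * vx2 Phi n * dX Phi (inr i, a1, b1) - vx1 Phi n * vx2 Phi n * dX Phi (inr j, a2, b2))) = 0.
Proof. by move=> h; rewrite FpZ FpB [X in X - _]Fp_XXq [X in _ - X]Fp_XXq h subrr mulr0. Qed.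

End Fn.

Theorem lemma5 (Phi : comNzRingType) (n : nat) (S : nat -> Prop)
  (cmd : minsky_cmds n)
  (hn : (0 < n)%N)
  (Hwf : wf_cmds cmd)
  (Hacyc : acyclic cmd)
  (HM : forall x : nat,
     (S x -> exists k, mrun cmd k (inord 1, (2 ^ (2 ^ x))%N, 0%N)
                       = Some (ord0, 1%N, 0%N)) /\
     (~ S x -> forall k, mrun cmd k (inord 1, (2 ^ (2 ^ x))%N, 0%N) <> None))
  (m : nat) (L : seq (lc_term Phi n))
  (HL : forall t, t \in L -> lc_valid cmd t)
  (Hcomb : eqB (gm Phi n m) (\sum_(t <- L) lc_val t)) :
  S m.
Proof.
case: (classic (S m)) => // nS; exfalso.
have [_ Hn] := HM m.
have hstart : hc Phi n cmd (inord 1, (2 ^ (2 ^ m))%N, 0%N) = 0.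
  rewrite /hc; case: excluded_middle_informative => // -[k hk].
  have := Hn nS k.+1; rewrite mrunS hk /=.
  case E: (cmd ord0 _ _) => [[[j al] be]|] //.
  by have [] := Hwf _ _ _ _ _ _ E.
have hend : hc Phi n cmd (ord0, 1%N, 0%N) = 1.
  rewrite /hc; case: excluded_middle_informative => // -[]; by exists 0%N.
have HI : Ip Phi n (gm Phi n m - \sum_(t <- L) lc_val t).
  apply: (Hcomb (Ip Phi n)).
  - split.
    + exact: Ip0.
    + exact: IpD.
    + exact: IpM.
    + exact: (Ip_dder _ _ _ (@bad_sh1 n)).
    + exact: (Ip_dder _ _ _ (@bad_sh2 n)).
  - rewrite /delta1 /vx2 dder_dX; apply: IpU.
    by exists (shift1 (inl true, 0%N, 0%N)); rewrite cmUU.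
  - rewrite /delta2 /vx1 dder_dX; apply: IpU.
    by exists (shift2 (inl false, 0%N, 0%N)); rewrite cmUU.
have := Fp_Eq _ _ cmd _ _ HI.
rewrite Fp_sum big_seq big1; last first.
  move=> [[[c [[i e] s]] [[j al] be]] [a b]] /HL [Hc hw].
  rewrite (Fp_Eq _ _ cmd _ _ (lc_Eq _ _ c i e s j al be _ _ hw)).
  apply: Fp_term; exact: (@hc_step _ _ cmd Hwf _ _ _ _ _ _ _ _ Hc hw).
have E1 : iter (2 ^ (2 ^ m))%N (@delta1 Phi n) (vq Phi (inord 1)) = dX Phi (inr (inord 1), (2 ^ (2 ^ m))%N, 0%N).
  by rewrite /vq iter_dX iter_sh1.
have E2 : @delta1 Phi n (vq Phi ord0) = dX Phi (inr ord0, 1%N, 0%N).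
  exact: dder_dX.
rewrite /gm FpB E1 E2 [X in X - _]Fp_XXq [X in _ - X]Fp_XXq hstart hend sub0r => /eqP.
by rewrite oppr_eq0 oner_eq0.
Qed.
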